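(* Let $\mathcal F$ be an RKHS on $\mathcal Z$ with kernel $K$, equipped with the RKHS norm $\|\cdot\|_K$, and let $U,\delta,\lambda>0$. Then for any $h$, $$\sup_{f\in\mathcal F}\ \Psi_n(h,f)-\lambda\Big(\|f\|_K^2+\frac U{\delta^2}\|f\|_{2,n}^2\Big)=\frac1{4\lambda}\psi_n^\top K_n^{1/2}\Big(\frac U{n\delta^2}K_n+I\Big)^{-1}K_n^{1/2}\psi_n=\frac1{4\lambda}\psi_n^\top K_n\Big(\frac U{n\delta^2}K_n+I\Big)^{-1}\psi_n,$$ where $K_n=(K(z_i,z_j))_{i,j=1}^n$ and $\psi_n=(\frac1n(y_i-h(x_i)))_{i=1}^n$.
   Context: Samples $(y_i,x_i,z_i)_{i=1}^n$. $\Psi_n(h,f)=\frac1n\sum_i(y_i-h(x_i))f(z_i)$ and $\|f\|_{2,n}^2=\frac1n\sum_if(z_i)^2$. *)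

(* Defs.v *)
From HB Require Import structures.
From mathcomp Require Import all_boot all_order all_algebra.
From mathcomp Require Import all_classical all_reals ereal.
Set Implicit Arguments. Unset Strict Implicit. Unset Printing Implicit Defensive.
Import Order.TTheory GRing.Theory Num.Theory.
Local Open Scope ring_scope.
Local Open Scope classical_set_scope.

Definition knorm (R : realType) (Z : Type) (ip : (Z -> R) -> (Z -> R) -> R)
  (f : Z -> R) : R := Num.sqrt (ip f f).

Definition is_RKHS (R : realType) (Z : Type) (F : set (Z -> R))
  (ip : (Z -> R) -> (Z -> R) -> R) (K : Z -> Z -> R) : Prop :=
      F (fun _ => 0) /\
      (forall f g, F f -> F g -> F (fun t => f t + g t)) /\
      (forall (a : R) f, F f -> F (fun t => a * f t)) /\
      (forall f g, F f -> F g -> ip f g = ip g f) /\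
      (forall f g k, F f -> F g -> F k ->
          ip (fun t => f t + g t) k = ip f k + ip g k) /\
      (forall (a : R) f g, F f -> F g -> ip (fun t => a * f t) g = a * ip f g) /\
      (forall f, F f -> 0 <= ip f f) /\
      (forall f, F f -> ip f f = 0 -> f = (fun _ => 0)) /\
      (forall u : nat -> (Z -> R), (forall m, F (u m)) ->
         (forall e : R, 0 < e -> exists N, forall m k, (N <= m)%N -> (N <= k)%N ->
             knorm ip (fun t => u m t - u k t) < e) ->
         exists2 g, F g & forall e : R, 0 < e -> exists N, forall m, (N <= m)%N ->
             knorm ip (fun t => u m t - g t) < e) /\
      (forall z, F (K z)) /\
      (forall f z, F f -> f z = ip f (K z)).

Definition Psi_n (R : realType) (X Z : Type) (n : nat)
  (y : 'I_n -> R) (x : 'I_n -> X) (z : 'I_n -> Z) (h : X -> R) (f : Z -> R) : R :=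
  n%:R^-1 * \sum_(i < n) (y i - h (x i)) * f (z i).

Definition norm2n_sq (R : realType) (Z : Type) (n : nat)
  (z : 'I_n -> Z) (f : Z -> R) : R :=
  n%:R^-1 * \sum_(i < n) f (z i) ^+ 2.

Definition gram (R : realType) (Z : Type) (n : nat) (K : Z -> Z -> R)
  (z : 'I_n -> Z) : 'M[R]_n := \matrix_(i, j) K (z i) (z j).

Definition psi_vec (R : realType) (X : Type) (n : nat)
  (y : 'I_n -> R) (x : 'I_n -> X) (h : X -> R) : 'cV[R]_n :=
  \col_i (n%:R^-1 * (y i - h (x i))).

Definition psd (R : realType) (n : nat) (A : 'M[R]_n) : Prop :=
  A^T = A /\ forall v : 'cV[R]_n, 0 <= (v^T *m A *m v) 0 0.

Definition psd_sqrt (R : realType) (n : nat) (A : 'M[R]_n) : 'M[R]_n :=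
  xget 0 [set S : 'M[R]_n | psd S /\ S *m S = A].

Definition qform (R : realType) (n : nat) (v : 'cV[R]_n) (M : 'M[R]_n) : R :=
  (v^T *m M *m v) 0 0.

(* Main.v *)
Require Import Defs.
From HB Require Import structures.
From mathcomp Require Import all_boot all_order all_algebra.
From mathcomp Require Import all_classical all_reals ereal.
From mathcomp Require Import sesquilinear spectral.
From mathcomp.real_closed Require Import complex.
From mathcomp Require Import ring lra.
Import Order.TTheory GRing.Theory Num.Theory.
Local Open Scope ring_scope.
Local Open Scope classical_set_scope.

Lemma interp (R : fieldType) (s : seq R) (g : R -> R) :
  exists p : {poly R}, forall x, x \in s -> p.[x] = g x.
Proof.
elim: s => [|a s [p Hp]]; first by exists 0.
case: (boolP (a \in s)) => [ains|anotin].
  by exists p => x; rewrite inE => /orP[/eqP->|]; [apply: Hp|apply: Hp].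
pose q := \prod_(b <- s) ('X - b%:P).
have qa : q.[a] != 0.
  rewrite /q horner_prod prodf_seq_neq0; apply/allP => b bs /=.
  by rewrite hornerXsubC subr_eq0; apply: contraNneq anotin => ->.
have qs : forall x, x \in s -> q.[x] = 0.
  move=> x xs; rewrite /q horner_prod (big_rem x) //= hornerXsubC subrr mul0r //.
exists (p + ((g a - p.[a]) / q.[a]) *: q) => x; rewrite inE hornerD hornerZ.
case/orP=> [/eqP->|xs]; first by rewrite mulfVK // addrC subrK.
by rewrite (qs x xs) mulr0 addr0 Hp.
Qed.

Lemma trmx_horner (R : comNzRingType) n (A : 'M[R]_n.+1) (p : {poly R}) :
  A^T = A -> (horner_mx A p)^T = horner_mx A p.
Proof.
move=> AT; elim/poly_ind: p => [|p c IH]; first by rewrite rmorph0 trmx0.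
rewrite rmorphD rmorphM /= horner_mx_X horner_mx_C raddfD /= tr_scalar_mx.
rewrite -mulmxE trmx_mul IH AT.
by have := comm_mx_horner p (erefl (A *m A)) => ->.
Qed.

Section S.
Variable R : realType.
Variable n : nat.
Variable A : 'M[R]_n.+1.
Hypothesis AT : A^T = A.
Local Notation C := (R[i]).
Local Notation f := (real_complex R).
Let AC : 'M[C]_n.+1 := map_mx f A.

Lemma fC_real (x : R) : (real_complex R x : C) \is Num.real.
Proof. by rewrite realE !lecE /= eqxx /= le_total. Qed.

Lemma AC_herm : AC \is hermsymmx.
Proof.
apply/is_hermitianmxP; rewrite expr0 scale1r; apply/matrixP => i j; rewrite !mxE.
rewrite -[in RHS]AT mxE.
by rewrite conj_Creal // fC_real.
Qed.


Lemma Creal_eq (x : C) : x \is Num.real -> x = real_complex R (complex.Re x).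
Proof.
case: x => a b; rewrite realE !lecE /=.
by case/orP => /andP[/eqP H _]; rewrite /real_complex_def; congr Complex; rewrite H.
Qed.

Section Gen.
Variables (P : 'M[C]_n.+1) (e : 'I_n.+1 -> R).
Let d : 'rV[C]_n.+1 := \row_i f (e i).
Hypothesis AC_eq : AC = invmx P *m diag_mx d *m P.
Hypothesis P_unit : P \in unitmx.

Lemma det_e i : \det (A - (e i)%:M) = 0.
Proof.
apply: (fmorph_inj f) => /=; rewrite rmorph0 -det_map_mx.
rewrite map_mxB /= map_scalar_mx /= -/AC.
rewrite AC_eq.
have -> : (f (e i))%:M = invmx P *m (f (e i))%:M *m P.
  by rewrite mul_mx_scalar -scalemxAl mulVmx ?P_unit // scalemx1.
rewrite -mulmxBl -mulmxBr !det_mulmx.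
have -> : diag_mx d - (f (e i))%:M = diag_mx (d - const_mx (f (e i))).
  apply/matrixP => a b; rewrite !mxE; case: eqP => [->|_]; rewrite ?mulr1n ?mulr0n ?subr0 //.
by rewrite det_diag (bigD1 i) //= /d !mxE subrr mul0r mulr0 mul0r.
Qed.

Lemma sumsq_gt0 m (u : 'rV[R]_m) : u != 0 -> 0 < \sum_j u 0 j * u 0 j.
Proof.
move=> u0; case: (pickP (fun j => u 0 j != 0)) => [j uj|H]; last first.
  case/negP: u0; apply/eqP/matrixP => a b; rewrite ord1 mxE.
  by move/negbFE/eqP: (H b).
rewrite (bigD1 j) //=; apply: (@lt_le_trans _ _ (u 0 j * u 0 j)).
  by rewrite lt0r mulf_neq0 //= -expr2 sqr_ge0.
by rewrite lerDl sumr_ge0 // => k _; rewrite -expr2 sqr_ge0.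
Qed.

Lemma e_ge0 (Apsd : forall v : 'cV[R]_n.+1, 0 <= (v^T *m A *m v) 0 0) i : 0 <= e i.
Proof.
have /eqP/det0P [u u0 uA] := det_e i.
move: uA; rewrite mulmxBr mul_mx_scalar => /eqP; rewrite subr_eq0 => /eqP uA.
have := Apsd u^T; rewrite trmxK uA -scalemxAl mxE.
rewrite pmulr_lge0 // mxE; under eq_bigr do rewrite mxE; exact: sumsq_gt0.
Qed.

Lemma sqrt_ex (Apsd : forall v : 'cV[R]_n.+1, 0 <= (v^T *m A *m v) 0 0) :
  exists S : 'M[R]_n.+1, psd S /\ S *m S = A.
Proof.
have [p Hp] := @interp R (map e (enum 'I_n.+1)) (fun x => Num.sqrt (Num.sqrt x)).
pose T := horner_mx A p.
have TT : T^T = T by apply: trmx_horner.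
exists (T *m T); split; [split|].
- by rewrite trmx_mul TT.
- move=> v; rewrite mulmxA -[v^T *m T]trmxK trmx_mul trmxK TT -mulmxA.
  rewrite mxE; apply: sumr_ge0 => k _; rewrite mxE -expr2; exact: sqr_ge0.
have -> : T *m T *m (T *m T) = horner_mx A (p ^+ 4).
  by rewrite rmorphXn /= -/T !exprS expr0 mulr1 !mulmxE !mulrA.
apply: (@map_mx_inj _ _ f); rewrite map_horner_mx -/AC AC_eq.
rewrite horner_mx_uconjC // horner_mx_diag; congr (_ *m diag_mx _ *m _).
apply/matrixP => a b; rewrite !mxE horner_map /= hornerE; congr (real_complex R _).
rewrite Hp; last by apply: map_f; rewrite mem_enum.
rewrite (_ : 4 = 2 * 2)%N // exprM !sqr_sqrtr //; exact: e_ge0 Apsd b.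
Qed.
End Gen.

Lemma sqrt_ex_S (Apsd : forall v : 'cV[R]_n.+1, 0 <= (v^T *m A *m v) 0 0) :
  exists S : 'M[R]_n.+1, psd S /\ S *m S = A.
Proof.
have Heq : AC = invmx (spectralmx AC) *m diag_mx (spectral_diag AC) *m spectralmx AC.
  exact/orthomx_spectralP/hermitian_normalmx/AC_herm.
move: (spectral_unit AC) (hermitian_spectral_diag_real AC_herm) Heq.
move: (spectralmx AC) (spectral_diag AC) => P d Pu dreal Heq.
have H : AC = invmx P *m diag_mx (\row_i real_complex R (complex.Re (d 0 i))) *m P.
  rewrite Heq; congr (_ *m diag_mx _ *m _); apply/rowP => i; rewrite mxE.
  by apply: Creal_eq; apply: (mxOverP dreal 0 i).
exact: (sqrt_ex _ _ H Pu Apsd).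
Qed.
End S.

Lemma psd_sqrt_ex (R : realType) n (A : 'M[R]_n) : psd A ->
  exists S : 'M[R]_n, psd S /\ S *m S = A.
Proof.
case: n A => [|n] A [AT Apsd].
  by exists A; split; [split|apply/matrixP => -[]].
exact: sqrt_ex_S.
Qed.

Lemma psd_sqrtP (R : realType) n (A : 'M[R]_n) : psd A ->
  psd (psd_sqrt A) /\ psd_sqrt A *m psd_sqrt A = A.
Proof. by move=> /psd_sqrt_ex ex; apply: (xgetPex 0 ex). Qed.


Lemma sqrt_comm (R : realType) m (S Kn : 'M[R]_m) (c : R) : S *m S = Kn ->
  (c *: Kn + 1%:M) \in unitmx ->
  S *m invmx (c *: Kn + 1%:M) *m S = Kn *m invmx (c *: Kn + 1%:M).
Proof.
move=> SS Mu; set M := c *: Kn + 1%:M.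
have SM : S *m M = M *m S.
  by rewrite mulmxDr mulmxDl mulmx1 mul1mx -scalemxAr -scalemxAl -SS mulmxA.
have SMi : S *m invmx M = invmx M *m S.
  have := congr1 (fun A => invmx M *m A *m invmx M) SM.
  rewrite /= !mulmxA mulVmx // mul1mx -!mulmxA mulmxV // mulmx1 => H.
  by rewrite H.
by rewrite -mulmxA -SMi mulmxA SS.
Qed.

Lemma aux4 (R : realType) (l T : R) : l != 0 -> (4 * l)^-1 * (2 * l * (2 * l * T)) = l * T.
Proof. by move=> l0; field. Qed.

Section Main.
Variables (R : realType) (Z : Type) (F : set (Z -> R))
  (ip : (Z -> R) -> (Z -> R) -> R) (K : Z -> Z -> R) (n : nat) (z : 'I_n -> Z).
Hypothesis F0 : F (fun _ => 0).
Hypothesis FD : forall f g, F f -> F g -> F (fun t => f t + g t).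
Hypothesis FZ : forall (a : R) f, F f -> F (fun t => a * f t).
Hypothesis ipC : forall f g, F f -> F g -> ip f g = ip g f.
Hypothesis ipD : forall f g k, F f -> F g -> F k ->
          ip (fun t => f t + g t) k = ip f k + ip g k.
Hypothesis ipZ : forall (a : R) f g, F f -> F g -> ip (fun t => a * f t) g = a * ip f g.
Hypothesis ip_ge0 : forall f, F f -> 0 <= ip f f.
Hypothesis FK : forall z, F (K z).
Hypothesis repr : forall f z, F f -> f z = ip f (K z).

Definition gv (b : 'cV[R]_n) : Z -> R := fun t => \sum_(j < n) b j 0 * K (z j) t.

Lemma F_gv_seq (b : 'cV[R]_n) (s : seq 'I_n) : F (fun t => \sum_(j <- s) b j 0 * K (z j) t).
Proof.
elim: s => [|a s IH].
  have -> : (fun t => \sum_(j <- [::]) b j 0 * K (z j) t) = (fun _ => 0).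
    by apply: boolp.funext => t; rewrite big_nil.
  exact: F0.
have -> : (fun t => \sum_(j <- a :: s) b j 0 * K (z j) t) =
   (fun t => (fun t => b a 0 * K (z a) t) t + (fun t => \sum_(j <- s) b j 0 * K (z j) t) t).
  by apply: boolp.funext => t; rewrite big_cons.
by apply: FD => //; apply: FZ.
Qed.

Lemma F_gv b : F (gv b).
Proof. exact: F_gv_seq. Qed.

Lemma ip0 f : F f -> ip (fun _ => 0) f = 0.
Proof.
move=> Ff; have -> : (fun _ : Z => 0 : R) = (fun t => 0 * (fun _ => 0) t).
  by apply: boolp.funext => t; rewrite mul0r.
by rewrite ipZ // mul0r.
Qed.

Lemma ip_gv_seq (b : 'cV[R]_n) f (s : seq 'I_n) : F f ->
  ip (fun t => \sum_(j <- s) b j 0 * K (z j) t) f = \sum_(j <- s) b j 0 * f (z j).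
Proof.
move=> Ff; elim: s => [|a s IH].
  have -> : (fun t => \sum_(j <- [::]) b j 0 * K (z j) t) = (fun _ => 0).
    by apply: boolp.funext => t; rewrite big_nil.
  by rewrite ip0 // big_nil.
have -> : (fun t => \sum_(j <- a :: s) b j 0 * K (z j) t) =
   (fun t => (fun t => b a 0 * K (z a) t) t + (fun t => \sum_(j <- s) b j 0 * K (z j) t) t).
  by apply: boolp.funext => t; rewrite big_cons.
rewrite ipD //; [|by apply: FZ|exact: F_gv_seq].
by rewrite IH ipZ // big_cons -ipC // -repr.
Qed.

Lemma ip_gv b f : F f -> ip (gv b) f = \sum_(j < n) b j 0 * f (z j).
Proof. exact: ip_gv_seq. Qed.

Lemma Ksym a c : K a c = K c a.
Proof. by rewrite repr // [RHS]repr // ipC. Qed.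

Local Notation Kn := (gram K z).

Lemma gv_z b i : gv b (z i) = (Kn *m b) i 0.
Proof.
rewrite /gv mxE; apply: eq_bigr => j _; rewrite mxE mulrC Ksym //.
Qed.

Lemma Kn_psd : psd Kn.
Proof.
split.
  by apply/matrixP => i j; rewrite !mxE Ksym.
move=> v; rewrite -mulmxA mxE.
have -> : \sum_(j < n) v^T 0 j * (Kn *m v) j 0 = ip (gv v) (gv v).
  rewrite ip_gv; last exact: F_gv.
  by apply: eq_bigr => j _; rewrite mxE gv_z.
exact/ip_ge0/F_gv.
Qed.

Variables (X : Type) (y : 'I_n -> R) (x : 'I_n -> X) (h : X -> R) (U delta lambda : R).
Hypotheses (n0 : (0 < n)%N) (U0 : 0 < U) (d0 : 0 < delta) (l0 : 0 < lambda).
Local Notation c := (U / (n%:R * delta ^+ 2)).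
Local Notation M := (c *: Kn + 1%:M).
Local Notation psin := (psi_vec y x h).

Lemma c_gt0 : 0 < c.
Proof. by rewrite divr_gt0 // mulr_gt0 // ?ltr0n // exprn_gt0. Qed.

Lemma M_unit : M \in unitmx.
Proof.
rewrite unitmxE unitfE; apply/negP => /det0P [v v0 vM].
have : (v *m M *m v^T) 0 0 = 0 by rewrite vM mul0mx mxE.
rewrite mulmxDr mulmx1 -scalemxAr mulmxDl -scalemxAl !mxE.
have q0 := Kn_psd.2 v^T; rewrite trmxK in q0.
have s0 := @sumsq_gt0 R _ v v0.
have cq := mulr_ge0 (ltW c_gt0) q0.
rewrite !mxE in cq s0 *.
under [X in _ + X]eq_bigr do rewrite mxE.
by lra.
Qed.

Local Notation beta := ((2 * lambda)^-1 *: (invmx M *m psin)).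
Local Notation kb i := ((Kn *m beta) i 0).

Lemma Mbeta : M *m beta = (2 * lambda)^-1 *: psin.
Proof. by rewrite -scalemxAr mulKVmx // M_unit. Qed.

Lemma psi_entry i : psin i 0 = 2 * lambda * (c * kb i + beta i 0).
Proof.
have := congr1 (fun A : 'M[R]_(n,1) => A i 0) Mbeta.
rewrite mulmxDl mul1mx -scalemxAl /=.
have addE : forall (A B : 'M[R]_(n,1)), (A + B) i 0 = A i 0 + B i 0 by move=> A B; rewrite mxE.
have scE : forall a (A : 'M[R]_(n,1)), (a *: A) i 0 = a * A i 0 by move=> a A; rewrite mxE.
rewrite addE !scE => ->.
by rewrite mulrA mulfV ?mul1r // mulf_neq0 // gt_eqF.
Qed.

Lemma Psi_eq (w : 'I_n -> R) : n%:R^-1 * \sum_(i < n) (y i - h (x i)) * w i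
   = 2 * lambda * (c * \sum_(i < n) kb i * w i + \sum_(i < n) beta i 0 * w i).
Proof.
have -> : c * \sum_(i < n) kb i * w i = \sum_(i < n) c * (kb i * w i) by rewrite mulr_sumr.
rewrite -big_split /= !mulr_sumr; apply: eq_bigr => i _.
have := psi_entry i; rewrite mxE => /(congr1 (fun t => t * w i)).
move=> H; rewrite [LHS]mulrA H; ring.
Qed.

Lemma cE (t : R) : U / delta ^+ 2 * (n%:R^-1 * t) = c * t.
Proof.
have nz : n%:R != 0 :> R by rewrite pnatr_eq0 -lt0n.
have dz : delta != 0 by rewrite gt_eqF.
by field; rewrite nz dz.
Qed.

Lemma J_g : Psi_n y x z h (gv beta)
   - lambda * (ip (gv beta) (gv beta) + U / delta ^+ 2 * norm2n_sq z (gv beta))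
   = lambda * (\sum_(i < n) beta i 0 * kb i + c * \sum_(i < n) kb i ^+ 2).
Proof.
rewrite /Psi_n /norm2n_sq ip_gv; last exact: F_gv.
have E1 : \sum_(i < n) (y i - h (x i)) * gv beta (z i) = \sum_(i < n) (y i - h (x i)) * kb i.
  by apply: eq_bigr => i _; rewrite gv_z.
have E2 : \sum_(i < n) gv beta (z i) ^+ 2 = \sum_(i < n) kb i ^+ 2.
  by apply: eq_bigr => i _; rewrite gv_z.
have E3 : \sum_(i < n) beta i 0 * gv beta (z i) = \sum_(i < n) beta i 0 * kb i.
  by apply: eq_bigr => i _; rewrite gv_z.
have E4 : \sum_(i < n) kb i * kb i = \sum_(i < n) kb i ^+ 2.
  by apply: eq_bigr => i _; rewrite expr2.
rewrite E1 E2 E3 Psi_eq E4 cE.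
have -> : \sum_(i < n) beta i 0 * kb i = \sum_(i < n) kb i * beta i 0.
  by apply: eq_bigr => i _; rewrite mulrC.
ring.
Qed.

Lemma J_le f : F f -> Psi_n y x z h f
   - lambda * (ip f f + U / delta ^+ 2 * norm2n_sq z f)
   <= lambda * (\sum_(i < n) beta i 0 * kb i + c * \sum_(i < n) kb i ^+ 2).
Proof.
move=> Ff; rewrite /Psi_n /norm2n_sq Psi_eq cE.
pose g := gv beta.
have Fg : F g := F_gv beta.
have Fmg : F (fun t => -1 * g t) by apply: FZ.
pose d := fun t => f t + (fun t => -1 * g t) t.
have Fd : F d by apply: FD.
have t1E : ip g f = \sum_(i < n) beta i 0 * f (z i) by rewrite ip_gv.
have s1E : ip g g = \sum_(i < n) beta i 0 * kb i.
  by rewrite ip_gv //; apply: eq_bigr => i _; rewrite /g gv_z.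
have H1 : ip d d = ip f f - 2 * ip g f + ip g g.
  rewrite {1}/d (ipD _ _ _ Ff Fmg Fd) (ipZ _ _ _ Fg Fd) (ipC _ _ Ff Fd) (ipC _ _ Fg Fd).
  rewrite /d (ipD _ _ _ Ff Fmg Ff) (ipD _ _ _ Ff Fmg Fg) (ipZ _ _ _ Fg Ff) (ipZ _ _ _ Fg Fg).
  rewrite (ipC _ _ Ff Fg).
  ring.
have H1' := ip_ge0 _ Fd; rewrite H1 t1E s1E in H1'.
have H2 : 0 <= \sum_(i < n) kb i ^+ 2 - 2 * \sum_(i < n) kb i * f (z i)
               + \sum_(i < n) f (z i) ^+ 2.
  have -> : \sum_(i < n) kb i ^+ 2 - 2 * \sum_(i < n) kb i * f (z i)
               + \sum_(i < n) f (z i) ^+ 2 = \sum_(i < n) (kb i - f (z i)) ^+ 2.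
    rewrite mulr_sumr -sumrB -big_split /=; apply: eq_bigr => i _; ring.
  by apply: sumr_ge0 => i _; apply: sqr_ge0.
move: H1' H2.
set a := ip f f.
set t1 := \sum_(i < n) beta i 0 * f (z i).
set t2 := \sum_(i < n) kb i * f (z i).
set t3 := \sum_(i < n) f (z i) ^+ 2.
set s1 := \sum_(i < n) beta i 0 * kb i.
set s2 := \sum_(i < n) kb i ^+ 2.
move=> H1' H2.
rewrite -subr_ge0.
have -> : lambda * (s1 + c * s2) - (2 * lambda * (c * t2 + t1) - lambda * (a + c * t3))
   = lambda * ((a - 2 * t1 + s1) + c * (s2 - 2 * t2 + t3)) by ring.
apply: mulr_ge0; first exact: ltW.
by apply: addr_ge0 => //; apply: mulr_ge0 => //; apply: ltW; apply: c_gt0.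
Qed.

Lemma main_lemma (S : 'M[R]_n) : S *m S = Kn ->
  ereal_sup [set (Psi_n y x z h f
                  - lambda * (ip f f + U / delta ^+ 2 * norm2n_sq z f))%:E
            | f in F]
    = ((4 * lambda)^-1 * qform psin (S *m invmx M *m S))%:E
  /\ (4 * lambda)^-1 * qform psin (S *m invmx M *m S)
     = (4 * lambda)^-1 * qform psin (Kn *m invmx M).
Proof.
move=> SS; have E2 := @sqrt_comm R n _ _ c SS M_unit.
have IB : invmx M *m psin = (2 * lambda) *: beta.
  by rewrite scalerA mulfV ?scale1r // mulf_neq0 // gt_eqF.
have Q : (4 * lambda)^-1 * qform psin (Kn *m invmx M)
   = lambda * (\sum_(i < n) beta i 0 * kb i + c * \sum_(i < n) kb i ^+ 2).
  have IB2 : Kn *m (invmx M *m psin) = (2 * lambda) *: (Kn *m beta).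
    by rewrite -scalemxAr scalerA mulfV ?scale1r // mulf_neq0 // gt_eqF.
  rewrite /qform -!mulmxA IB2 -scalemxAr mxE mxE.
  have -> : \sum_(j < n) psin^T 0 j * (Kn *m beta) j 0
           = \sum_(j < n) (2 * lambda) * (c * kb j ^+ 2 + beta j 0 * kb j).
    apply: eq_bigr => j _; rewrite mxE psi_entry; ring.
  rewrite -mulr_sumr big_split /= -mulr_sumr.
  have l0' : lambda != 0 by rewrite gt_eqF.
  set s1 := \sum_(i < n) beta i 0 * kb i; set s2 := \sum_(i < n) kb i ^+ 2.
  by rewrite aux4 //; ring.
rewrite E2; split => //; rewrite Q.
apply/eqP; rewrite eq_le; apply/andP; split.
  by apply: ge_ereal_sup => _ [f Ff <-]; rewrite lee_fin; apply: J_le.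
apply: ereal_sup_ubound; exists (gv beta); first exact: F_gv.
by rewrite J_g.
Qed.
End Main.

Theorem proposition1 (R : realType) (X Z : Type) (F : set (Z -> R))
  (ip : (Z -> R) -> (Z -> R) -> R) (K : Z -> Z -> R) (n : nat)
  (y : 'I_n -> R) (x : 'I_n -> X) (z : 'I_n -> Z) (U delta lambda : R) :
  is_RKHS F ip K -> (0 < n)%N -> 0 < U -> 0 < delta -> 0 < lambda ->
  forall h : X -> R,
  let Kn := gram K z in
  let psin := psi_vec y x h in
  let M := (U / (n%:R * delta ^+ 2)) *: Kn + 1%:M in
  ereal_sup [set (Psi_n y x z h f
                  - lambda * (ip f f + U / delta ^+ 2 * norm2n_sq z f))%:E
            | f in F]
    = ((4 * lambda)^-1 * qform psin (psd_sqrt Kn *m invmx M *m psd_sqrt Kn))%:E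
  /\ (4 * lambda)^-1 * qform psin (psd_sqrt Kn *m invmx M *m psd_sqrt Kn)
     = (4 * lambda)^-1 * qform psin (Kn *m invmx M).
Proof.
move=> [F0 [FD [FZ [ipC [ipD [ipZ [ipge0 [ipdef [compl [FK repr]]]]]]]]]].
move=> n0 U0 d0 l0 h Kn psin M.
have Kpsd := @Kn_psd R Z F ip K n z F0 FD FZ ipC ipD ipZ ipge0 FK repr.
have [_ SS] := @psd_sqrtP R _ _ Kpsd.
by apply: main_lemma => //; exact: SS.
Qed.
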